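(* Let $p\neq 2$ be a prime and $G=Z_{p^{\lambda_1}}\times\cdots\times Z_{p^{\lambda_n}}$ with $0<\lambda_1<\cdots<\lambda_n$. The join-irreducible elements of $\mathrm{Char}(G)$ are precisely the subgroups $J(i,j)$ for $i\in\{1,\dots,n\}$, $j\in\{1,\dots,\lambda_i\}$.
   Context: $\mathrm{Char}(G)$ is the lattice of characteristic subgroups of $G$; an element of a finite lattice is join-irreducible if it is not the bottom element and is not the join of two elements each strictly below it. Tuples are ordered componentwise; for $\mathbf 0\le\mathbf a\le(\lambda_1,\dots,\lambda_n)$, $T(\mathbf a)$ is the set of $(g_1,\dots,g_n)\in G$ with $|g_i|=p^{a_i}$, and $R(\mathbf a)=\bigcup_{\mathbf b\le\mathbf a}T(\mathbf b)$. For $i\in\{1,\dots,n\}$ and $j\in\{1,\dots,\lambda_i\}$, $J(i,j)=R(\mathbf a)$ where $a_k=j$ for $k\ge i$ and $a_k=\max\{0,\,j-(\lambda_i-\lambda_k)\}$ for $k<i$. *)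

(* Defs.v *)
From HB Require Import structures.
From mathcomp Require Import all_boot all_order all_fingroup.
Set Implicit Arguments. Unset Strict Implicit. Unset Printing Implicit Defensive.

(* G = Z_{p^l_1} x ... x Z_{p^l_n} is presented as an internal direct product
   G = <[x 0]> x ... x <[x (n-1)]> with #[x i] = p ^ l i; an element
   g = \prod_i y i (y i \in <[x i]>) is the tuple (y 0, ..., y (n-1)). *)

Section Defs.
Variable gT : finGroupType.
Local Open Scope group_scope.

Definition Tset (n p : nat) (x : 'I_n -> gT) (b : 'I_n -> nat) : {set gT} :=
  [set g | [exists y : {ffun 'I_n -> gT},
     [forall i, (y i \in <[x i]>) && (#[y i] == p ^ b i)%N]
     && (g == \prod_(i < n) y i)]].

Definition Rset (n p : nat) (x : 'I_n -> gT) (a : 'I_n -> nat) : {set gT} :=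
  \bigcup_(b : {ffun 'I_n -> 'I_((\max_(k < n) a k).+1)} | [forall k, (b k <= a k)%N])
     Tset p x (fun k => nat_of_ord (b k)).

(* J(i,j) = R(a), a_k = j for k >= i, a_k = max(0, j - (l_i - l_k)) for k < i
   (nat truncated subtraction realizes the max with 0). *)
Definition Jset (n p : nat) (x : 'I_n -> gT) (l : 'I_n -> nat) (i : 'I_n) (j : nat)
  : {set gT} :=
  Rset p x (fun k => if (i <= k)%N then j else (j - (l i - l k))%N).

(* Join-irreducible elements of the lattice Char(G) of characteristic subgroups
   (bottom = trivial subgroup, join of K and L = K <*> L, which is characteristic). *)
Definition char_join_irreducible (G H : {group gT}) : Prop :=
  H \char G /\ H :!=: 1 /\
  ~ (exists K L : {group gT},
       [/\ K \char G, L \char G, K \proper H, L \proper H & (H :=: K <*> L)]).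
End Defs.

(* Main.v *)
Require Import Defs.
From HB Require Import structures.
From mathcomp Require Import all_boot all_order all_fingroup all_solvable.
From mathcomp Require Import zify.
Set Implicit Arguments. Unset Strict Implicit. Unset Printing Implicit Defensive.

Section Main.
Variable gT : finGroupType.
Variable G : {group gT}.
Variables (p n : nat) (l : 'I_n -> nat) (x : 'I_n -> gT).
Hypotheses (pr_p : prime p) (p2 : p != 2) (lpos : forall i, 0 < l i)
  (lmono : forall i j : 'I_n, i < j -> l i < l j)
  (ox : forall i, #[x i]%g = p ^ l i)
  (defG : (\big[dprod/1]_(i < n) <[x i]>)%g = G).
Local Open Scope group_scope.

Lemma cGG : abelian G.
Proof.
move: defG; elim/big_rec: _ G => [H <-|i A _ IH H /dprodP[[K L defK defL] <- cKL _]].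
  exact: abelian1.
by rewrite defL in cKL *; rewrite abelianM cycle_abelian IH.
Qed.

Lemma sxG i : <[x i]> \subset G.
Proof.
move: defG; rewrite (bigD1 i) //= => /dprodP[[K L defK defL] <- _ _].
by rewrite defL mulG_subl.
Qed.

Lemma xG i : x i \in G.
Proof. by rewrite -cycle_subG sxG. Qed.

Lemma pG : p.-group G.
Proof.
rewrite /pgroup -(bigdprod_card defG).
apply big_ind => //; first by move=> a b; rewrite pnatM => ->.
by move=> i _; rewrite -orderE ox pnatX pnat_id.
Qed.

Definition coord (g : gT) : {ffun 'I_n -> gT} :=
  odflt [ffun=> 1] [pick c : {ffun 'I_n -> gT} |
     [forall i, c i \in <[x i]>] && (g == \prod_(i < n) c i)].

Lemma coordP g : g \in G ->
  (forall i, coord g i \in <[x i]>) /\ g = \prod_(i < n) coord g i.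
Proof.
move=> Gg; rewrite /coord; case: pickP => [c /andP[/forallP Hc /eqP ->] //| none].
have [c [Hc def _]] := mem_bigdprod defG Gg.
suff: false by [].
rewrite -(none [ffun i => c i]); apply/andP; split.
  by apply/forallP=> i; rewrite ffunE; apply: Hc.
by apply/eqP; rewrite def; apply: eq_bigr => i _; rewrite ffunE.
Qed.

Lemma prodG (c : 'I_n -> gT) : (forall i, c i \in <[x i]>) -> \prod_(i < n) c i \in G.
Proof.
move=> Hc; rewrite -(bigdprodW defG); exact: mem_prodg.
Qed.

Lemma coord_uniq (c : 'I_n -> gT) : (forall i, c i \in <[x i]>) ->
  forall i, coord (\prod_(i < n) c i) i = c i.
Proof.
move=> Hc i; have Gg := prodG Hc.
have [c' [Hc' def uniq]] := mem_bigdprod defG Gg.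
have [H1 H2] := coordP Gg.
by rewrite (uniq c) // -?(uniq (coord (\prod_(i < n) c i))).
Qed.

Lemma cG a b : a \in G -> b \in G -> commute a b.
Proof. by move=> Ga Gb; apply: (centsP cGG). Qed.

Lemma prodM (f g : 'I_n -> gT) : (forall i, f i \in G) -> (forall i, g i \in G) ->
  \prod_(i < n) (f i * g i) = (\prod_(i < n) f i) * \prod_(i < n) g i.
Proof.
move=> Hf Hg.
suff [] : (\prod_(i < n) (f i * g i) = (\prod_(i < n) f i) * \prod_(i < n) g i)
   /\ (\prod_(i < n) f i \in G /\ \prod_(i < n) g i \in G) by [].
elim/big_rec3: _ => [|i a b c _ [-> [Gb Gc]]]; first by rewrite mulg1 !group1.
split; last by rewrite !groupM.
rewrite -!mulgA; congr (_ * _); rewrite !mulgA; congr (_ * _); exact: cG.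
Qed.

Lemma coordG g i : g \in G -> coord g i \in G.
Proof. by move/coordP=> [H _]; apply: (subsetP (sxG i)). Qed.

Lemma coordM g h i : g \in G -> h \in G -> coord (g * h) i = coord g i * coord h i.
Proof.
move=> Gg Gh; have [Hg dg] := coordP Gg; have [Hh dh] := coordP Gh.
rewrite {1}dg {1}dh -prodM; last by move=> k; apply: coordG.
  by rewrite (coord_uniq (c := fun k => coord g k * coord h k)) // => k; rewrite groupM.
by move=> k; apply: coordG.
Qed.

Lemma coord1 i : coord 1 i = 1.
Proof.
have := coord_uniq (c := fun _ => 1) (fun k => group1 _) i.
by rewrite big1_eq.
Qed.

Lemma coordX g m i : g \in G -> coord (g ^+ m) i = coord g i ^+ m.
Proof.
move=> Gg; elim: m => [|m IH]; first by rewrite !expg0 coord1.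
by rewrite !expgS coordM ?groupX // IH.
Qed.

Lemma coordV g i : g \in G -> coord g^-1 i = (coord g i)^-1.
Proof.
move=> Gg; apply: (mulgI (coord g i)); rewrite -coordM ?groupV // !mulgV.
exact: coord1.
Qed.

Lemma coord_cyc k y i : y \in <[x k]> -> coord y i = if i == k then y else 1.
Proof.
move=> yk.
have Hc : forall j : 'I_n, (if j == k then y else 1) \in <[x j]>.
  by move=> j; case: eqP => [->|]; rewrite ?group1.
by have := coord_uniq Hc i; rewrite -big_mkcond big_pred1_eq.
Qed.

Lemma coord_in g i : g \in G -> coord g i \in <[x i]>.
Proof. by case/coordP=> H _; apply: H. Qed.

Definition shear (phi : gT -> gT) i g := g * phi (coord g i).

Section Shear.
Variables (phi : gT -> gT) (i : 'I_n).
Hypotheses (phiG : forall a, a \in <[x i]> -> phi a \in G)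
  (phiM : {in <[x i]> &, {morph phi : a b / a * b}})
  (phiI : forall g, g \in G -> shear phi i g = 1 -> g = 1).

Lemma shearM : {in G &, {morph shear phi i : a b / a * b}}.
Proof.
move=> a b Ga Gb; rewrite /shear coordM // phiM ?coord_in //.
have Pa := phiG (coord_in i Ga).
rewrite -!mulgA; congr (_ * _); rewrite !mulgA; congr (_ * _); exact: cG.
Qed.

Lemma shearG g : g \in G -> shear phi i g \in G.
Proof. by move=> Gg; rewrite /shear groupM // phiG // coord_in. Qed.

Lemma char_shear (K : {group gT}) : K \char G ->
  forall g, g \in K -> phi (coord g i) \in K.
Proof.
move=> /charP[sKG chK] g Kg.
pose f := @Morphism _ _ G (shear phi i) shearM.
have injf : 'injm f.
  apply/injmP=> a b Ga Gb eqf.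
  apply/eqP; rewrite eq_mulgV1; apply/eqP; apply: phiI; first by rewrite groupM ?groupV.
  have -> : shear phi i (a * b^-1) = f (a * b^-1) by [].
  by rewrite morphM ?groupV // morphV //; apply/eqP; rewrite -eq_mulgV1; apply/eqP.
have imf : f @* G = G.
  apply/eqP; rewrite eqEcard card_injm // leqnn andbT.
  by apply/subsetP=> y /morphimP[h Gh _ ->]; apply: shearG.
have := chK f injf imf => fK.
have : f g \in K by rewrite -fK mem_morphim // (subsetP sKG).
rewrite /= /shear => Kf.
by rewrite -(mulKg g (phi _)) groupM ?groupV.
Qed.
End Shear.

Lemma ordp_cyc i c : c \in <[x i]> -> #[c] %| p ^ l i.
Proof. by move=> ci; rewrite -ox orderE; apply: order_dvdG. Qed.

Lemma char_coord (K : {group gT}) i : K \char G -> forall g, g \in K -> coord g i \in K.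
Proof.
move=> chK; apply: (@char_shear id) => //.
- by move=> a ai; apply: (subsetP (sxG i)).
- move=> g Gg /= eq1.
  have ci := coord_in i Gg.
  have : coord (shear id i g) i = 1 by rewrite eq1 coord1.
  rewrite /shear /= coordM ?coordG // (coord_cyc _ ci) eqxx => c2.
  have c1 : coord g i = 1.
    apply/eqP; rewrite -order_eq1 -dvdn1.
    have <- : (gcdn 2 (p ^ l i) = 1)%N.
      apply/eqP; change (coprime 2 (p ^ l i)); apply: coprimeXr.
      by rewrite prime_coprime // dvdn_prime2 // eq_sym.
    by rewrite dvdn_gcd ordp_cyc // andbT order_dvdn expgS expg1 c2.
  by move: eq1; rewrite /shear /= c1 mulg1.
Qed.

Lemma char_push (K : {group gT}) i k w : k != i -> w \in <[x k]> -> #[w] %| #[x i] ->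
  K \char G -> forall m, x i ^+ m \in K -> w ^+ m \in K.
Proof.
move=> nki wk dvd chK m Km.
have := @char_shear (eltm dvd) i _ _ _ K chK _ Km.
rewrite (coord_cyc _ (mem_cycle _ _)) eqxx eltmE; apply.
- move=> a /cycleP[j ->]; rewrite eltmE; apply: (subsetP (sxG k)); exact: groupX.
- exact: eltmM.
- move=> g Gg eq1.
  have ci := coord_in i Gg.
  have : coord (shear (eltm dvd) i g) i = 1 by rewrite eq1 coord1.
  have ek : eltm dvd (coord g i) \in <[x k]>.
    by case/cycleP: ci => j ->; rewrite eltmE groupX.
  rewrite /shear coordM ?coordG //; last exact: (subsetP (sxG k)).
  rewrite (coord_cyc _ ek) eq_sym (negbTE nki) mulg1 => c1.
  by move: eq1; rewrite /shear c1 -[X in eltm _ X](expg0 (x i)) eltmE expg0 mulg1.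
Qed.

Lemma p_gt0 : 0 < p. Proof. exact: prime_gt0. Qed.

Lemma ordP k c : c \in <[x k]> -> (#[c] = p ^ logn p #[c])%N /\ logn p #[c] <= l k.
Proof.
move=> ck; have := ordp_cyc ck; case/(dvdn_pfactor _ _ pr_p) => m le ->.
by rewrite pfactorK.
Qed.

Lemma cpow k c u : c \in <[x k]> -> (c ^+ (p ^ u)%N == 1) = (logn p #[c] <= u).
Proof.
move=> ck; rewrite -order_dvdn; have [E _] := ordP ck.
by rewrite {1}E dvdn_Pexp2l ?prime_gt1.
Qed.

Lemma mem_cycX k c m : c \in <[x k]> ->
  (c \in <[x k ^+ (p ^ m)%N]>) = (logn p #[c] <= l k - m).
Proof.
move=> ck; apply/idP/idP.
  case/cycleP=> t ->; rewrite -(@cpow k _ _ (groupX _ (mem_cycle _ _))) -!expgM -order_dvdn ox.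
  rewrite mulnCA; apply: dvdn_mull; rewrite -expnD dvdn_exp2l //; lia.
move=> le.
have [lm|ml] := leqP m (l k); last first.
  have s0 : logn p #[c] = 0 by lia.
  have [E _] := ordP ck; move: E; rewrite s0 expn0 => /eqP.
  by rewrite order_eq1 => /eqP ->; rewrite group1.
move: (le); rewrite -(cpow _ ck); case/cycleP: ck => t ->.
rewrite -expgM -order_dvdn ox.
have -> : (p ^ l k = p ^ m * p ^ (l k - m))%N by rewrite -expnD subnKC.
rewrite dvdn_pmul2r ?expn_gt0 ?p_gt0 // => dv.
by rewrite -(divnK dv) mulnC expgM mem_cycle.
Qed.

Lemma cyc_gen i y : y \in <[x i]> ->
  <[y]> = <[x i ^+ (p ^ (l i - logn p #[y]))%N]>.
Proof.
move=> yi; have [E le] := ordP yi.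
apply/eqP; rewrite eqEcard cycle_subG (mem_cycX _ yi).
apply/andP; split; first by lia.
rewrite -!orderE orderXdiv ox ?dvdn_exp2l ?leq_subr // -expnB ?p_gt0 ?leq_subr //.
by rewrite subKn // -E.
Qed.

Lemma gen_in i y j : y \in <[x i]> -> j <= logn p #[y] ->
  x i ^+ (p ^ (l i - j))%N \in <[y]>.
Proof.
move=> yi le; have [E le2] := ordP yi.
rewrite (cyc_gen yi).
have -> : (p ^ (l i - j) = p ^ (l i - logn p #[y]) * p ^ (logn p #[y] - j))%N.
  by rewrite -expnD; congr expn; lia.
by rewrite expgM mem_cycle.
Qed.

Lemma coord_inj g h : g \in G -> h \in G -> (forall k, coord g k = coord h k) -> g = h.
Proof.
move=> Gg Gh E; have [_ ->] := coordP Gg; have [_ ->] := coordP Gh.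
by apply: eq_bigr => k _; apply: E.
Qed.

Definition aJ (i : 'I_n) j (k : 'I_n) := if (i <= k)%N then j else (j - (l i - l k))%N.

Definition Jp i j := [set g in G | [forall k, coord g k ^+ (p ^ aJ i j k)%N == 1]].

Lemma inJP i j g : reflect (g \in G /\ forall k, logn p #[coord g k] <= aJ i j k) (g \in Jp i j).
Proof.
rewrite inE; apply: (iffP andP) => [[Gg /forallP H]|[Gg H]]; split => //.
  by move=> k; rewrite -(cpow _ (coord_in k Gg)); apply: H.
by apply/forallP=> k; rewrite (cpow _ (coord_in k Gg)).
Qed.

Lemma Jset_Jp i j : Jset p x l i j = Jp i j.
Proof.
apply/setP=> g; rewrite /Jset /Rset; apply/bigcupP/inJP.
  case=> b /forallP bl; rewrite inE => /existsP[y /andP[/forallP Hy /eqP dg]].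
  have Hy1 k : y k \in <[x k]> by case/andP: (Hy k).
  have Gg : g \in G by rewrite dg; apply: prodG.
  split=> // k; rewrite dg coord_uniq //.
  case/andP: (Hy k) => _ /eqP ->; rewrite pfactorK //; exact: bl.
move=> [Gg H].
have lt k : logn p #[coord g k] < (\max_(k0 < n) aJ i j k0).+1.
  by rewrite ltnS (leq_trans (H k)) // (@leq_bigmax _ (fun k0 => aJ i j k0) k).
exists [ffun k => inord (logn p #[coord g k])].
  by apply/forallP=> k; rewrite ffunE inordK //; apply: H.
rewrite inE; apply/existsP; exists (coord g); apply/andP; split.
  apply/forallP=> k; rewrite coord_in //= ffunE inordK //.
  by have [E _] := ordP (coord_in k Gg); apply/eqP.
by apply/eqP; case: (coordP Gg).
Qed.

Lemma lmono_le (i k : 'I_n) : (i <= k)%N -> l i <= l k.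
Proof.
rewrite leq_eqVlt => /orP[/eqP/val_inj->//|/lmono/ltnW//].
Qed.

Lemma aJ_prop i j k s : j <= l i ->
  (s <= aJ i j k) = (s <= j) && (s <= l k - (l i - j)).
Proof.
move=> jl; rewrite /aJ; case: ifP => ik.
  have := lmono_le ik; lia.
have : l k < l i by apply: lmono; rewrite ltnNge ik.
lia.
Qed.

Lemma Jp_MO i j : j <= l i -> 'Mho^(l i - j)(G) :&: 'Ohm_j(G) = Jp i j.
Proof.
move=> jl.
rewrite (MhoEabelian _ pG cGG) (OhmEabelian pG (abelianS (Ohm_sub j G) cGG)).
apply/setP => g; rewrite inE; apply/andP/inJP.
  case=> /imsetP[h Gh ->] /LdivP[Gg e1]; split=> // k; rewrite aJ_prop //.
  apply/andP; split.
    rewrite -(cpow _ (coord_in k Gg)); apply/eqP.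
    by rewrite -coordX // e1 coord1.
  rewrite -(mem_cycX _ (coord_in k Gg)) coordX //.
  by case/cycleP: (coord_in k Gh) => t ->; rewrite -expgM mulnC expgM mem_cycle.
case=> Gg H; split.
  have Hk k : coord g k \in <[x k ^+ (p ^ (l i - j))%N]>.
    by rewrite (mem_cycX _ (coord_in k Gg)); have := H k; rewrite aJ_prop // => /andP[].
  pose t k := s2val (cyclePmin (Hk k)).
  have tE k : coord g k = x k ^+ (p ^ (l i - j))%N ^+ t k by rewrite /t; case: (cyclePmin (Hk k)).
  have hx k : x k ^+ t k \in <[x k]> by apply: mem_cycle.
  have Gh := prodG hx.
  apply/imsetP; exists (\prod_(k < n) x k ^+ t k) => //.
  apply: coord_inj => //; first by apply: groupX.
  by move=> k; rewrite coordX // coord_uniq // tE -!expgM mulnC.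
apply/LdivP; split => //; apply: coord_inj; rewrite ?groupX // => k.
rewrite coordX // coord1; apply/eqP; rewrite (cpow _ (coord_in k Gg)).
by have := H k; rewrite aJ_prop // => /andP[].
Qed.

Lemma gen_char (r : seq {group gT}) : (forall J, J \in r -> J \char G) ->
  <<\bigcup_(J <- r) J>> \char G.
Proof.
elim: r => [|J r IH] Hr; first by rewrite big_nil gen0 char1.
rewrite big_cons -joingE -joing_idr; apply: charY; first by apply: Hr; rewrite mem_head.
by apply: IH => K Kr; apply: Hr; rewrite inE Kr orbT.
Qed.

Lemma lat (H : {group gT}) (r : seq {group gT}) : char_join_irreducible G H ->
  (forall J, J \in r -> J \char G /\ J \subset H) ->
  H \subset <<\bigcup_(J <- r) J>> -> exists2 J, J \in r & H :=: J.
Proof.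
move=> [chH [ntH nosplit]]; elim: r => [|J r IH] Hr sub.
  by case/negP: ntH; apply/eqP; apply/trivgP; rewrite big_nil gen0 in sub.
have [chJ sJH] := Hr J (mem_head J r).
have Hr' : forall K, K \in r -> K \char G /\ K \subset H.
  by move=> K Kr; apply: Hr; rewrite inE Kr orbT.
pose R := (<<\bigcup_(K <- r) K>>)%G.
have sRH : R \subset H.
  by rewrite gen_subG bigcup_seq; apply/bigcupsP => K Kr; case: (Hr' K Kr).
have chR : R \char G by apply: gen_char => K Kr; case: (Hr' K Kr).
have eH : H :=: J <*> R.
  apply/eqP; rewrite eqEsubset; apply/andP; split.
    by rewrite joing_idr joingE; move: sub; rewrite big_cons.
  by apply/joing_subP; split.
have [eJ|nJ] := eqVneq (J : {set gT}) H; first by exists J; rewrite ?mem_head // eJ.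
have [eR|nR] := eqVneq (R : {set gT}) H.
  have sHR : H \subset <<\bigcup_(K <- r) K>> by rewrite -{1}eR.
  have [K Kr eK] := IH Hr' sHR.
  by exists K; rewrite // inE Kr orbT.
case: nosplit; exists J, R; split => //; rewrite properEneq ?nJ ?nR //.
Qed.

Definition ex i j := x i ^+ (p ^ (l i - j))%N.

Lemma ex_cyc i j : ex i j \in <[x i]>.
Proof. exact: mem_cycle. Qed.

Lemma ex_pow i j : 1 <= j <= l i -> ex i j ^+ (p ^ j.-1)%N != 1.
Proof.
move=> /andP[j1 jl]; rewrite /ex -expgM -expnD -order_dvdn ox dvdn_Pexp2l ?prime_gt1 //.
lia.
Qed.

Lemma ex_neq1 i j : 1 <= j <= l i -> ex i j != 1.
Proof.
move=> jj; apply: contra (ex_pow jj) => /eqP ->; by rewrite expg1n.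
Qed.

Lemma logn_ex i j : j <= l i -> logn p #[ex i j] <= j.
Proof.
move=> jl; have := @mem_cycX i (ex i j) (l i - j) (ex_cyc i j) => E.
have := mem_cycle (x i ^+ (p ^ (l i - j))%N) 1; rewrite expg1 -/(ex i j) E.
lia.
Qed.

Lemma ex_in i j : j <= l i -> ex i j \in Jp i j.
Proof.
move=> jl; apply/inJP; split; first exact: (subsetP (sxG i) _ (ex_cyc i j)).
move=> k; rewrite (coord_cyc _ (ex_cyc i j)); case: eqP => [->|_].
  by rewrite /aJ leqnn logn_ex.
by rewrite order1 logn1.
Qed.

Lemma Jp_char i j : j <= l i -> Jp i j \char G.
Proof. by move=> jl; rewrite -Jp_MO //; apply: charI; [apply: Mho_char | apply: Ohm_char]. Qed.

Lemma CL (K : {group gT}) i j : K \char G -> j <= l i -> ex i j \in K -> Jp i j \subset K.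
Proof.
move=> chK jl eK; apply/subsetP => g /inJP[Gg H].
have [_ ->] := coordP Gg; apply: group_prod => k _.
have ck := coord_in k Gg; have Hk := H k.
suff [u uK cu] : exists2 u, u \in K & coord g k \in <[u]>.
  by apply: (subsetP _ _ cu); rewrite cycle_subG.
have [ki|nki] := eqVneq k i.
  rewrite ki in ck Hk *; exists (ex i j) => //.
  rewrite /ex (mem_cycX _ ck); move: Hk; rewrite /aJ leqnn; move: (logn _ _) => s; clear -jl; lia.
have [ik|ik] := ltnP i k.
  pose w := x k ^+ (p ^ (l k - l i))%N.
  have lik : l i < l k by apply: lmono.
  have dvd : #[w] %| #[x i].
    rewrite ox order_dvdn /w -expgM -expnD subnK; last exact: ltnW.
    by rewrite -ox expg_order.
  have := @char_push K i k w nki (mem_cycle _ _) dvd chK _ eK.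
  move=> wK; exists (w ^+ (p ^ (l i - j))%N); first exact: wK.
  rewrite /w -expgM -expnD (mem_cycX _ ck); move: Hk; rewrite /aJ (ltnW ik).
  move: (logn _ _) => s; clear -jl lik; lia.
have ki : (k < i)%N.
  rewrite ltn_neqAle ik andbT; apply: contra nki => /eqP e.
  by apply/eqP/val_inj.
have lki : l k < l i by apply: lmono.
have dvd : #[x k] %| #[x i] by rewrite !ox dvdn_exp2l // ltnW.
have := @char_push K i k (x k) nki (cycle_id _) dvd chK _ eK.
move=> wK; exists (x k ^+ (p ^ (l i - j))%N); first exact: wK.
rewrite (mem_cycX _ ck); move: Hk; rewrite /aJ ifN; last by rewrite -ltnNge.
move: (logn _ _) => s; clear -jl lki; lia.
Qed.

Lemma back (H : {group gT}) i j : 1 <= j <= l i -> H :=: Jp i j ->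
  char_join_irreducible G H.
Proof.
move=> jj eH; have jl : j <= l i by case/andP: jj.
split; first by rewrite eH Jp_char.
split.
  apply/trivgPn; exists (ex i j); first by rewrite eH ex_in.
  exact: ex_neq1.
case=> K [L [chK chL pKH pLH eKL]].
have sKG := char_sub chK; have sLG := char_sub chL.
have eHe : ex i j \in K * L.
  rewrite -comm_joingE; last by apply: centC; apply: (sub_abelian_cent2 cGG).
  by rewrite -eKL eH ex_in.
case/mulsgP: eHe => a b aK bL eab.
have Ga := subsetP sKG a aK; have Gb := subsetP sLG b bL.
have := coordM i Ga Gb; rewrite -eab (coord_cyc _ (ex_cyc i j)) eqxx => ei.
have uK := char_coord i chK aK; have vL := char_coord i chL bL.
have : ~~ ((coord a i ^+ (p ^ j.-1)%N == 1) && (coord b i ^+ (p ^ j.-1)%N == 1)).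
  apply/negP => /andP[/eqP u1 /eqP v1]; move: (ex_pow jj).
  by rewrite ei expgMn ?u1 ?v1 ?mulg1 ?eqxx //; apply: cG; apply: coordG.
have gen (M : {group gT}) c : M \char G -> c \in M -> c \in <[x i]> ->
    c ^+ (p ^ j.-1)%N != 1 -> ~~ (M \proper H).
  move=> chM cM ci nc; rewrite properE negb_and negbK; apply/orP; right.
  rewrite eH; apply: CL => //.
  have : ex i j \in <[c]>.
    apply: gen_in => //; move: nc; rewrite (cpow _ ci) -ltnNge.
    case/andP: jj => j1 _; move: (logn _ _) => s; clear -j1; lia.
  by apply: subsetP; rewrite cycle_subG.
case/nandP => [nu|nv].
  by case/negP: (gen K _ chK uK (coord_in i Ga) nu).
by case/negP: (gen L _ chL vL (coord_in i Gb) nv).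
Qed.

Lemma fwd (H : {group gT}) : char_join_irreducible G H ->
  exists i j, 1 <= j <= l i /\ H :=: Jp i j.
Proof.
move=> cji; have [chH _] := cji.
pose N := (\max_(k < n) l k).+1.
pose JG (k : 'I_n) (s : nat) := ('Mho^(l k - s)(G) :&: 'Ohm_s(G))%G.
pose cond := [pred ks : 'I_n * 'I_N | (1 <= ks.2 <= l ks.1) && (Jp ks.1 ks.2 \subset H)].
pose r := [seq JG ks.1 (nat_of_ord ks.2) | ks : 'I_n * 'I_N <- enum cond].
have Hr : forall J, J \in r -> J \char G /\ J \subset H.
  move=> J /mapP[ks]; rewrite mem_enum => /andP[/andP[s1 sl] sH] ->.
  have E := Jp_MO sl; split; rewrite /= E //; exact: Jp_char.
have sub : H \subset <<\bigcup_(J <- r) J>>.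
  apply/subsetP => g Hg; have Gg := subsetP (char_sub chH) g Hg.
  have [_ ->] := coordP Gg; apply: group_prod => k _.
  have cH := char_coord k chH Hg; have ck := coord_in k Gg.
  have [c1|nc1] := eqVneq (coord g k) 1; first by rewrite c1 group1.
  have [E sl] := ordP ck.
  have s1 : 1 <= logn p #[coord g k].
    rewrite lt0n; apply: contra nc1 => /eqP s0.
    by rewrite -order_eq1 E s0.
  have sN : logn p #[coord g k] < N.
    by rewrite ltnS (leq_trans sl) // (@leq_bigmax _ (fun k0 => l k0) k).
  have JH : Jp k (logn p #[coord g k]) \subset H.
    apply: CL chH sl _.
    have := gen_in ck (leqnn _); apply: subsetP; by rewrite cycle_subG.
  have cJ : coord g k \in Jp k (logn p #[coord g k]).
    apply/inJP; split; first exact: coordG.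
    move=> m; rewrite (coord_cyc _ ck); case: eqP => [->|_].
      by rewrite /aJ leqnn.
    by rewrite order1 logn1.
  apply: mem_gen; rewrite bigcup_seq; apply/bigcupP; exists (JG k (logn p #[coord g k])).
    apply/mapP; exists (k, Ordinal sN) => //.
    by rewrite mem_enum inE /= s1 sl JH.
  by rewrite /= Jp_MO.
have [J Jr eHJ] := lat cji Hr sub.
case/mapP: Jr => ks; rewrite mem_enum => /andP[/andP[s1 sl] _] eJ.
exists ks.1, ks.2; split; first by rewrite s1 sl.
by rewrite eHJ eJ /= Jp_MO.
Qed.
End Main.


Theorem mainTheorem16 (gT : finGroupType) (G : {group gT}) (p n : nat)
  (l : 'I_n -> nat) (x : 'I_n -> gT) :
  prime p -> p != 2 ->
  (forall i : 'I_n, 0 < l i) ->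
  (forall i j : 'I_n, i < j -> l i < l j) ->
  (forall i : 'I_n, #[x i]%g = p ^ l i) ->
  (\big[dprod/1]_(i < n) <[x i]>)%g = G ->
  forall H : {group gT},
    char_join_irreducible G H <->
    exists (i : 'I_n) (j : nat), (1 <= j <= l i) /\ (H :=: Jset p x l i j)%g.
Proof.
move=> pr p2 lpos lmono ox defG H; split.
  move/(fwd pr p2 lmono ox defG) => [i [j [jj e]]]; exists i, j; split => //.
  by rewrite (Jset_Jp pr ox defG).
case=> i [j [jj e]]; apply: (back pr p2 lmono ox defG jj).
by rewrite e (Jset_Jp pr ox defG).
Qed.
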